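(* Let $G$ be a finite group, $p$ a prime, $P\in\mathrm{Syl}_p(G)$ and $x\in P$. Then $|x^G|\leq |x^G\cap P|\,\nu_p(G)$, with equality if and only if $x$ lies in a unique Sylow $p$-subgroup of $G$. In particular, if $x\in P$ lies in a unique Sylow $p$-subgroup of $G$, then $|x^G|\geq \nu_p(G)|x^P|$.
   Context: $x^G$ (resp. $x^P$) denotes the conjugacy class of $x$ in $G$ (resp. in $P$), $\mathrm{Syl}_p(G)$ the set of Sylow $p$-subgroups of $G$, and $\nu_p(G)=|\mathrm{Syl}_p(G)|$. *)

(* Defs.v *)
From mathcomp Require Import all_boot all_fingroup all_solvable.
Set Implicit Arguments. Unset Strict Implicit. Unset Printing Implicit Defensive.

(* Main.v *)
Require Import Defs.
From mathcomp Require Import all_boot all_fingroup all_solvable.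
Set Implicit Arguments. Unset Strict Implicit. Unset Printing Implicit Defensive.
Local Open Scope group_scope.

Lemma kJ (gT : finGroupType) (G : {group gT}) (p : nat) (y g : gT) :
  g \in G ->
  #|[set Q in 'Syl_p(G) | y ^ g \in Q]| = #|[set Q in 'Syl_p(G) | y \in Q]|.
Proof.
move=> Gg.
have -> : [set Q in 'Syl_p(G) | y ^ g \in Q] =
    (fun Q : {group gT} => (Q :^ g)%G) @: [set Q in 'Syl_p(G) | y \in Q].
  apply/setP=> Q; rewrite inE; apply/andP/imsetP.
    case=> sQ yQ; exists (Q :^ g^-1)%G.
      rewrite !inE /= pHallJ ?groupV //; rewrite inE in sQ; rewrite sQ /=.
      by rewrite -(memJ_conjg _ g) conjsgKV.
    by apply: val_inj; rewrite /= conjsgKV.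
  case=> R HR ->; move: HR; rewrite !inE => /andP[sR yR].
  by rewrite /= pHallJ // memJ_conjg sR yR.
apply: card_imset => Q R e; apply: val_inj.
exact: (can_inj (conjsgK g) (congr1 val e)).
Qed.

Theorem lemma2p6 (gT : finGroupType) (G P : {group gT}) (p : nat) (x : gT)
  (hp : prime p) (hP : P \in 'Syl_p(G)) (hx : x \in P) :
  [/\ (#|x ^: G| <= #|(x ^: G) :&: P| * #|'Syl_p(G)|)%N,
      (#|x ^: G| = #|(x ^: G) :&: P| * #|'Syl_p(G)|)%N <->
        #|[set Q in 'Syl_p(G) | x \in Q]| = 1%N
    & #|[set Q in 'Syl_p(G) | x \in Q]| = 1%N ->
        (#|'Syl_p(G)| * #|x ^: P| <= #|x ^: G|)%N].
Proof.
set C := x ^: G; set S := 'Syl_p(G).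
set k := fun y => #|[set Q in S | y \in Q]|.
have sylP : p.-Sylow(G) P by rewrite inE in hP.
have sPG : P \subset G := pHall_sub sylP.
have Ea : (\sum_(Q in S) #|C :&: Q| = #|C :&: P| * #|S|)%N.
  rewrite (eq_bigr (fun _ => #|C :&: P|)); first by rewrite sum_nat_const mulnC.
  move=> Q.
  rewrite inE => sylQ; have [g Gg ->] := Sylow_trans sylP sylQ.
  by rewrite -{1}(classGidr x Gg : C :^ g = C) -conjIg cardJg.
have Eb : (\sum_(Q in S) #|C :&: Q| = \sum_(y in C) k y)%N.
  transitivity (\sum_(Q in S) \sum_(y in C) (y \in Q : nat))%N.
    apply: eq_bigr => Q _; rewrite -big_mkcondr /= sum1_card.
    by apply: eq_card => y; rewrite inE.
  rewrite exchange_big; apply: eq_bigr => y _.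
  rewrite -big_mkcondr /= sum1_card /k.
  by apply: eq_card => Q; rewrite inE.
have Ec : (\sum_(y in C) k y = #|C| * k x)%N.
  rewrite (eq_bigr (fun _ => k x)); first by rewrite sum_nat_const.
  move=> y /imsetP[g Gg ->].
  exact: kJ.
have E : (#|C| * k x = #|C :&: P| * #|S|)%N by rewrite -Ec -Eb Ea.
have kpos : (0 < k x)%N.
  by rewrite card_gt0; apply/set0Pn; exists P; rewrite inE hP hx.
have Cpos : (0 < #|C|)%N by rewrite card_gt0; apply/set0Pn; exists x; apply: class_refl.
split.
- by rewrite -E leq_pmulr.
- rewrite -E -/(k x); split => [h|->]; last by rewrite muln1.
  by apply/eqP; rewrite -(eqn_pmul2l Cpos) muln1 -h.
- move=> k1; have : #|C| = (#|C :&: P| * #|S|)%N by rewrite -E /k k1 muln1.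
  move=> ->; rewrite mulnC; apply: leq_mul => //.
  apply: subset_leq_card; rewrite subsetI imsetS //=.
  exact: class_subG.
Qed.
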